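(* For arbitrary natural numbers $N>n$ and any $r\in\mathcal R_N$, the projection $\chi^r_n:A(r)\to A(p_n(r))$, $(b_1,\dots,b_N)\mapsto(b_1,\dots,b_n)$, is surjective; i.e. for each $a=(a_1,\dots,a_n)\in A(p_n(r))$ there exists $(b_{n+1},\dots,b_N)$ with $(a_1,\dots,a_n,b_{n+1},\dots,b_N)\in A(r)$.
   Context: $\mathcal R_N$ is the set of real symmetric $N\times N$ matrices with zero diagonal, nonnegative entries and $r_{i,k}+r_{k,j}\ge r_{i,j}$; $p_n(r)$ is the upper-left $n\times n$ corner of $r$. For a distance matrix $q$ of order $m$, $A(q)=\{a\in\mathbb R^m: |a_i-a_j|\le q_{i,j}\le a_i+a_j\ \forall i,j\}$. *)

(* Defs.v *)
From mathcomp Require Import all_boot all_order all_algebra.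
From mathcomp Require Import reals.
Set Implicit Arguments. Unset Strict Implicit. Unset Printing Implicit Defensive.
Import Order.TTheory GRing.Theory Num.Theory.
Local Open Scope ring_scope.

Definition distmx (R : realType) (N : nat) (r : 'M[R]_N) : Prop :=
  [/\ forall i j, r i j = r j i,
      forall i, r i i = 0,
      forall i j, 0 <= r i j
    & forall i j k, r i j <= r i k + r k j].

Definition corner (R : realType) (N n : nat) (hn : (n <= N)%N) (r : 'M[R]_N)
  : 'M[R]_n :=
  \matrix_(i < n, j < n) r (widen_ord hn i) (widen_ord hn j).

Definition Aset (R : realType) (m : nat) (q : 'M[R]_m) (a : 'I_m -> R) : Prop :=
  forall i j, `|a i - a j| <= q i j /\ q i j <= a i + a j.

(* Main.v *)
Require Import Defs.
From mathcomp Require Import all_boot all_order all_algebra.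
From mathcomp Require Import reals.
From mathcomp Require Import lra.
Import Order.TTheory GRing.Theory Num.Theory.
Local Open Scope ring_scope.

Lemma argmin_le (R : realType) n (j0 : 'I_n) (f : 'I_n -> R) :
  forall i, f (Order.arg_min j0 xpredT f) <= f i.
Proof. by case: arg_minP => // j _ H i; apply: H. Qed.

Lemma argmin_in (R : realType) n (j0 : 'I_n) (f : 'I_n -> R) :
  exists j, f (Order.arg_min j0 xpredT f) = f j.
Proof. by exists (Order.arg_min j0 xpredT f). Qed.

Theorem lemma4 (R : realType) (N n : nat) (hnN : (n < N)%N) (r : 'M[R]_N) :
  distmx r ->
  forall a : 'I_n -> R, Aset (corner (ltnW hnN) r) a ->
  exists b : 'I_N -> R, Aset r b /\ (forall i : 'I_n, b (widen_ord (ltnW hnN) i) = a i).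
Proof.
move=> [rs r0 rp rt] a Ha.
set w := widen_ord (ltnW hnN).
have Hc : forall i j, `|a i - a j| <= r (w i) (w j) /\ r (w i) (w j) <= a i + a j.
  by move=> i j; have := Ha i j; rewrite /corner mxE.
case: n hnN a Ha w Hc => [|n] hnN a Ha w Hc.
  pose k0 := Ordinal hnN.
  exists (fun k => r k k0); split; last by case.
  move=> i j; have H1 := rt i k0 j; have H2 := rt j k0 i.
  have H3 := rt i j k0; have H4 := rt j i k0.
  have E1 := rs j i; have E2 := rs k0 j.
  split; last lra.
  rewrite ler_norml; apply/andP; split; lra.
pose f k j := a j + r (w j) k.
pose b k := f k (Order.arg_min ord0 xpredT (f k)).
have ble : forall k j, b k <= f k j by move=> k j; apply: argmin_le.
have bin : forall k, exists j, b k = f k j by move=> k; apply: argmin_in.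
have key : forall k l, b k <= b l + r k l.
  move=> k l; have [j ->] := bin l; apply: (le_trans (ble k j)).
  rewrite /f; have H := rt (w j) k l; have E := rs l k; lra.
exists b; split.
  move=> k l; split.
    have H1 := key k l; have H2 := key l k; have E := rs l k.
    rewrite ler_norml; apply/andP; split; lra.
  have [i ->] := bin k; have [j ->] := bin l; rewrite /f.
  have H1 := rt k l (w i); have H2 := rt (w i) l (w j); have H3 := (Hc i j).2.
  have E := rs k (w i); lra.
move=> i; apply/eqP; rewrite eq_le; apply/andP; split.
  by apply: (le_trans (ble _ i)); rewrite /f r0 addr0.
have [j ->] := bin (w i); rewrite /f.
have := (Hc i j).1; rewrite ler_norml => /andP[_ H]; have E := rs (w i) (w j); lra.
Qed.
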